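(* For every fixed integer $m\ge2$, the limit $\tau_m^{**}:=\lim_{n\to\infty}n^{m/2}\tau_{n,n-m}$ exists and $$\tau_m^{**}=2^{-m}\,|H_m(x_m')|,$$ where $H_m$ is the Hermite polynomial of degree $m$ (orthogonal with respect to $e^{-x^2}$ on $\mathbb{R}$, normalized with leading coefficient $2^m$) and $x_m'$ is the largest zero of $H_m'$, i.e. the point of the rightmost local extremum of $H_m$.
   Context: $T_n$ denotes the Chebyshev polynomial of the first kind of degree $n$, $T_n(\cos\theta)=\cos n\theta$. For integers $n\ge k+2$, $k\ge 1$, let $\omega_{n,k}$ be the rightmost (largest) zero of $T_n^{(k+1)}$ and define $\tau_{n,k}:=|T_n^{(k)}(\omega_{n,k})|/T_n^{(k)}(1)$. *)

(* Defs.v *)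
From HB Require Import structures.
From mathcomp Require Import all_boot all_order all_algebra.
From mathcomp Require Import all_classical all_reals all_analysis.
Set Implicit Arguments. Unset Strict Implicit. Unset Printing Implicit Defensive.
Import Order.TTheory GRing.Theory Num.Theory.
Local Open Scope ring_scope.
Local Open Scope classical_set_scope.

(* Chebyshev polynomials of the first kind: T_0 = 1, T_1 = X,
   T_{n+2} = 2 X T_{n+1} - T_n  (equivalently T_n(cos t) = cos (n t)). *)
Fixpoint cheb_pair (R : realType) (n : nat) : {poly R} * {poly R} :=
  match n with
  | 0 => (1, 'X)
  | n'.+1 => let: (a, b) := cheb_pair R n' in (b, 2%:P * 'X * b - a)
  end.
Definition chebT (R : realType) (n : nat) : {poly R} := (cheb_pair R n).1.

(* Physicists' Hermite polynomials: H_0 = 1, H_1 = 2X,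
   H_{m+2} = 2X H_{m+1} - 2(m+1) H_m  (leading coefficient 2^m,
   orthogonal w.r.t. exp(-x^2)). *)
Fixpoint herm_pair (R : realType) (m : nat) : {poly R} * {poly R} :=
  match m with
  | 0 => (1, 2%:P * 'X)
  | m'.+1 => let: (a, b) := herm_pair R m' in
             (b, 2%:P * 'X * b - (2 * m'.+1)%:R%:P * a)
  end.
Definition hermH (R : realType) (m : nat) : {poly R} := (herm_pair R m).1.

Definition largest_root (R : realType) (p : {poly R}) : R :=
  sup [set x : R | root p x].

Definition omega (R : realType) (n k : nat) : R :=
  largest_root ((chebT R n)^`(k.+1)).

Definition tau (R : realType) (n k : nat) : R :=
  `|((chebT R n)^`(k)).[omega R n k]| / ((chebT R n)^`(k)).[1].

(* Main.v *)
Require Import Defs.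
From HB Require Import structures.
From mathcomp Require Import all_boot all_order all_algebra.
From mathcomp Require Import all_classical all_reals all_analysis.
From mathcomp Require Import polyrcf.
From mathcomp Require Import zify ring lra.
Import Order.TTheory GRing.Theory Num.Theory numFieldNormedType.Exports.
Local Open Scope classical_set_scope.
Local Open Scope ring_scope.


Section Alg.
Variable R : realType.
Local Notation T := (chebT R).
Local Notation H := (hermH R).

Lemma chebT_S n : T n.+1 = (cheb_pair R n).2.
Proof. by rewrite /chebT /=; case: cheb_pair. Qed.

Lemma chebT_SS n : T n.+2 = 2%:P * 'X * T n.+1 - T n.
Proof.
rewrite !chebT_S /chebT /=.
by case: (cheb_pair R n).
Qed.

Lemma chebT0 : T 0 = 1. Proof. by []. Qed.
Lemma chebT1 : T 1 = 'X. Proof. by []. Qed.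

Lemma coef2X (p : {poly R}) i : (2%:P * 'X * p)`_i = if i is i'.+1 then 2 * p`_i' else 0.
Proof.
rewrite -mulrA (mulrC 'X) coefCM coefMX; case: i => [|i] //=; by rewrite mulr0.
Qed.

Lemma coefT_SS n i : (T n.+2)`_i = (if i is i'.+1 then 2 * (T n.+1)`_i' else 0) - (T n)`_i.
Proof. by rewrite chebT_SS coefB coef2X. Qed.

Lemma coefT_big n0 i0 : (n0 < i0)%N -> (T n0)`_i0 = 0.
Proof.
suff: forall n, (forall i, (n < i)%N -> (T n)`_i = 0) /\ (forall i, (n.+1 < i)%N -> (T n.+1)`_i = 0).
  by move=> /(_ n0) [] + _; apply.
elim=> [|k [IH1 IH2]].
  split=> i hi; first by rewrite chebT0 coefC; case: i hi.
  by rewrite chebT1 coefX; case: i hi => // -[].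
split=> // i; rewrite coefT_SS; case: i => // i' hi.
by rewrite IH2 // IH1 ?mulr0 ?subr0 //; apply: ltn_trans hi.
Qed.


Lemma fact_neq0 n : (n`!%:R : R) != 0.
Proof. by rewrite pnatr_eq0 -lt0n fact_gt0. Qed.

Ltac nz := repeat (apply/andP; split); rewrite ?fact_neq0 //;
  rewrite -?natrD ?nat1r ?natr1 -?natrD ?nat1r ?natr1 -?natrM ?pnatr_eq0 //.

Definition Tcoef (i j : nat) : R :=
  if i is i'.+1 then (-1)^+j * 2^+i' * (i + 2*j)%:R * (i'+j)`!%:R / (j`!%:R * i`!%:R)
  else (-1)^+j.

Lemma Tcoef_rec i j : Tcoef i.+1 j.+1 = 2 * Tcoef i j.+1 - Tcoef i.+1 j.
Proof.
have h1 := fact_neq0 j; have h2 := fact_neq0 i; have h3 := fact_neq0 (i.-1 + j).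
case: i h2 h3 => [|i] h2 h3 /=.
  rewrite !add0n !factS !natrM !exprS !mulnS !mulSn !natrD fact0 mul0n expr0 !mul1r.
  set F := j`!%:R. rewrite -/F in h1. field.
  nz.
rewrite !mulnS !addSn !addnS !factS !natrM !exprS ?natrD ?natrM.
set A := (i + j)`!%:R; set B := j`!%:R; set C := i`!%:R.
rewrite -/B in h1. rewrite -/C in h2. rewrite /= -/A in h3.
field. nz.
Qed.


Lemma coefT_lead n : (T n.+1)`_n.+1 = 2^+n.
Proof.
elim: n => [|n IH]; first by rewrite chebT1 coefX.
by rewrite coefT_SS IH coefT_big // subr0 exprS.
Qed.

Lemma coefT_odd i j : (T (i + 2*j).+1)`_i = 0.
Proof.
elim: i j => [|i IHi] j.
  elim: j => [|j IHj]; first by rewrite chebT1 coefX.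
  by move: IHj; rewrite mulnS !add0n !addSn coefT_SS => ->; rewrite subr0.
elim: j => [|j IHj].
  by rewrite muln0 addn0 coefT_SS; have := IHi 0; rewrite muln0 addn0 => ->; rewrite coefT_big ?mulr0 ?subr0.
rewrite (_ : ((i.+1 + 2 * j.+1).+1 = (i.+1 + 2 * j).+3)%N); last by lia.
rewrite coefT_SS IHj subr0.
by rewrite (_ : ((i.+1 + 2 * j).+2 = (i + 2 * j.+1).+1)%N) ?IHi ?mulr0 //; lia.
Qed.

Lemma coefT_main i j : (T (i + 2*j))`_i = Tcoef i j.
Proof.
elim: i j => [|i IHi] j.
  rewrite /Tcoef add0n; elim: j => [|j IHj]; first by rewrite chebT0 coefC.
  by rewrite mulnS coefT_SS IHj add0r exprS mulN1r.
elim: j => [|j IHj].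
  rewrite muln0 addn0 coefT_lead /Tcoef muln0 addn0 expr0 mul1r fact0 mul1r factS.
  rewrite natrM addn0; field; nz.
rewrite Tcoef_rec -IHj -IHi.
rewrite (_ : ((i.+1 + 2 * j.+1) = (i.+1 + 2 * j).+2)%N); last by lia.
rewrite coefT_SS.
by rewrite (_ : ((i.+1 + 2 * j).+1 = (i + 2 * j.+1))%N) //; lia.
Qed.


Lemma hermH_S n : H n.+1 = (herm_pair R n).2.
Proof. by rewrite /hermH /=; case: herm_pair. Qed.

Lemma hermH_SS n : H n.+2 = 2%:P * 'X * H n.+1 - (2 * n.+1)%:R%:P * H n.
Proof. rewrite !hermH_S /hermH /=. by case: (herm_pair R n). Qed.

Lemma hermH0 : H 0 = 1. Proof. by []. Qed.
Lemma hermH1 : H 1 = 2%:P * 'X. Proof. by []. Qed.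

Lemma coefH_SS n i : (H n.+2)`_i =
  (if i is i'.+1 then 2 * (H n.+1)`_i' else 0) - (2 * n.+1)%:R * (H n)`_i.
Proof. by rewrite hermH_SS coefB coef2X coefCM. Qed.

Lemma coefH_big n0 i0 : (n0 < i0)%N -> (H n0)`_i0 = 0.
Proof.
suff: forall n, (forall i, (n < i)%N -> (H n)`_i = 0) /\ (forall i, (n.+1 < i)%N -> (H n.+1)`_i = 0).
  by move=> /(_ n0) [] + _; apply.
elim=> [|k [IH1 IH2]].
  split=> i hi; first by rewrite hermH0 coefC; case: i hi.
  by rewrite hermH1 coefCM coefX; case: i hi => [|[|i]] // _; rewrite mulr0.
split=> // i; rewrite coefH_SS; case: i => // i' hi.
by rewrite IH2 // IH1 ?mulr0 ?subr0 //; apply: ltn_trans hi.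
Qed.

Lemma coefH_lead n : (H n)`_n = 2^+n.
Proof.
suff: (H n)`_n = 2^+n /\ (H n.+1)`_n.+1 = 2^+n.+1 by case.
elim: n => [|n [_ IH]]; first by rewrite hermH0 coefC hermH1 coefCM coefX mulr1.
split; first by []. rewrite coefH_SS IH coefH_big ?mulr0 ?subr0 ?exprS //; lia.
Qed.

Lemma coefH_odd i j : (H (i + 2*j).+1)`_i = 0.
Proof.
elim: i j => [|i IHi] j.
  elim: j => [|j IHj]; first by rewrite hermH1 coefCM coefX mulr0.
  by move: IHj; rewrite mulnS !add0n !addSn coefH_SS => ->; rewrite mulr0 subr0.
elim: j => [|j IHj].
  rewrite muln0 addn0 coefH_SS; have := IHi 0; rewrite muln0 addn0 => ->.
  by rewrite coefH_big ?mulr0 ?subr0.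
rewrite (_ : ((i.+1 + 2 * j.+1).+1 = (i.+1 + 2 * j).+3)%N); last by lia.
rewrite coefH_SS IHj mulr0 subr0.
by rewrite (_ : ((i.+1 + 2 * j).+2 = (i + 2 * j.+1).+1)%N) ?IHi ?mulr0 //; lia.
Qed.

Definition Hcoef (i j : nat) : R :=
  (-1)^+j * 2^+i * (i + 2*j)`!%:R / (j`!%:R * i`!%:R).

Lemma Hcoef_rec i j :
  Hcoef i.+1 j.+1 = 2 * Hcoef i j.+1 - (2 * (i.+1 + 2*j).+1)%:R * Hcoef i.+1 j.
Proof.
have h1 := fact_neq0 j; have h2 := fact_neq0 i; have h3 := fact_neq0 (i + 2 * j).
rewrite /Hcoef (_ : (i.+1 + 2 * j.+1 = (i+2*j).+3)%N); last by lia.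
rewrite (_ : (i + 2 * j.+1 = (i+2*j).+2)%N); last by lia.
rewrite (_ : (i.+1 + 2 * j = (i+2*j).+1)%N); last by lia.
rewrite !factS !natrM !exprS.
set A := (i + 2 * j)`!%:R; set B := j`!%:R; set C := i`!%:R.
rewrite -/B in h1. rewrite -/C in h2. rewrite -/A in h3.
field. nz.
Qed.

Lemma Hcoef_rec0 j : Hcoef 0 j.+1 = - (2 * (2*j).+1)%:R * Hcoef 0 j.
Proof.
have h1 := fact_neq0 j; have h3 := fact_neq0 (2 * j).
rewrite /Hcoef !add0n (_ : (2 * j.+1 = (2*j).+2)%N); last by lia.
rewrite !factS !natrM !exprS.
set A := (2 * j)`!%:R; set B := j`!%:R.
rewrite -/B in h1. rewrite -/A in h3.
field. nz.
Qed.

Lemma coefH_main i j : (H (i + 2*j))`_i = Hcoef i j.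
Proof.
elim: i j => [|i IHi] j.
  rewrite add0n; elim: j => [|j IHj]; first by rewrite hermH0 coefC /Hcoef (_ : (0 + 2*0)`! = 1)%N // !expr0 !mul1r invr1.
  by rewrite mulnS coefH_SS IHj add0r Hcoef_rec0 mulNr.
elim: j => [|j IHj].
  rewrite muln0 addn0 coefH_lead /Hcoef muln0 addn0 expr0 mul1r fact0 mul1r.
  field; nz.
rewrite Hcoef_rec -IHj -IHi.
rewrite (_ : ((i.+1 + 2 * j.+1) = (i.+1 + 2 * j).+2)%N); last by lia.
rewrite coefH_SS.
by rewrite (_ : ((i.+1 + 2 * j).+1 = (i + 2 * j.+1))%N) //; lia.
Qed.


Lemma hermH_SS' n : H n.+2 = 2%:R * 'X * H n.+1 - (2 * n.+1)%:R * H n.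
Proof. by rewrite hermH_SS !polyC_natr. Qed.

Lemma deriv_nat n : (n%:R : {poly R})^`() = 0.
Proof. by rewrite -polyC_natr derivC. Qed.

Lemma hermH_deriv k : (H k.+1)^`() = (2 * k.+1)%:R *: H k.
Proof.
rewrite -mul_polyC polyC_natr.
suff: (H k.+1)^`() = (2 * k.+1)%:R * H k /\ (H k.+2)^`() = (2 * k.+2)%:R * H k.+1 by case.
elim: k => [|k [IH1 IH2]].
  have D1 : (H 1)^`() = (2 * 1)%:R * H 0.
    by rewrite hermH1 hermH0 derivM derivC derivX polyC_natr mul0r add0r !mulr1.
  split => //.
  rewrite hermH_SS' hermH1 hermH0 polyC_natr mulr1 derivB !derivM !deriv_nat derivX.
  ring.
split => //.
rewrite hermH_SS' derivB !derivM IH2 IH1 !deriv_nat derivX hermH_SS'.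
ring.
Qed.


Lemma largest_rootP (p : {poly R}) x0 : 0 < lead_coef p -> root p x0 ->
  [/\ root p (largest_root p), x0 <= largest_root p &
     forall t, largest_root p < t -> 0 < p.[t]].
Proof.
move=> lc rx0.
have p0 : p != 0 by rewrite -lead_coef_eq0 gt_eqF.
set E := [set x : R | root p x].
have ubE : ubound E (cauchy_bound p).
  move=> x /= rx; rewrite leNgt; apply/negP => /ltW hx.
  have := ge_cauchy_bound p0; move=> /(_ x). rewrite in_itv /= hx rx. by move=> /(_ isT).
have hs : has_sup E by split; [exists x0 | exists (cauchy_bound p)].
have le0 : x0 <= largest_root p by apply: sup_upper_bound.
have rs : root p (largest_root p).
  apply/negPn/negP => ns.
  have e0 : 0 < `|p.[largest_root p]| by rewrite normr_gt0.
  have [d d0 hd] := poly_cont (largest_root p) p e0.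
  have [y Ey hy] := sup_adherent d0 hs.
  have yle : y <= largest_root p by apply: sup_upper_bound.
  suff: `|y - largest_root p| < d by move/hd; rewrite (eqP Ey) sub0r normrN ltxx.
  rewrite ler0_norm ?subr_le0 // opprB; move: hy; rewrite /largest_root -/E; lra.
split => // t st.
have pt0 : ~~ root p t.
  apply/negP => rt; have : t <= largest_root p by apply: sup_upper_bound.
  by rewrite leNgt st.
have [B hB] := poly_pinfty_gt_lc lc.
rewrite ltNge; apply/negP => pt.
have hT : 0 <= p.[Num.max t B] by apply: le_trans (ltW lc) (hB _ _); rewrite le_max lexx orbT.
have tT : t <= Num.max t B by rewrite le_max lexx.
have [y /andP [y1 y2] ry] := Num.Theory.poly_ivt tT (introT andP (conj pt hT)).
have : y <= largest_root p by apply: sup_upper_bound.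
by rewrite leNgt (lt_le_trans st y1).
Qed.


Lemma size_H k : size (H k) = k.+1.
Proof.
apply/eqP; rewrite eqn_leq; apply/andP; split.
  by apply/leq_sizeP => j hj; apply: coefH_big.
rewrite ltnNge; apply/negP => hs.
have := coefH_lead k; rewrite nth_default // => /esym/eqP.
by rewrite expf_eq0 pnatr_eq0 andbF.
Qed.

Lemma lead_H k : lead_coef (H k) = 2^+k.
Proof. by rewrite lead_coefE size_H coefH_lead. Qed.

Lemma lead_H_gt0 k : 0 < lead_coef (H k).
Proof. by rewrite lead_H exprn_gt0. Qed.

Lemma herm_roots k : exists r r', [/\ r' < r, root (H k.+1) r,
  (forall t, r < t -> 0 < (H k.+1).[t]) & (forall t, r' < t -> 0 < (H k).[t])].
Proof.
elim: k => [|k [r [r' [rr' rr pos1 pos0]]]].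
  exists 0, (-1); split.
  - by rewrite ltrN10.
  - by rewrite /root hermH1 !hornerE.
  - by move=> t t0; rewrite hermH1 !hornerE mulr_gt0.
  - by move=> t _; rewrite hermH0 hornerE.
have neg : (H k.+2).[r] < 0.
  rewrite hermH_SS' !hornerE (eqP rr) mulr0 add0r oppr_lt0 -polyC_natr hornerC mulr_gt0 ?pos0 //.
have [B hB] := poly_pinfty_gt_lc (lead_H_gt0 k.+2).
have hT : 0 <= (H k.+2).[Num.max r B].
  by apply: le_trans (ltW (lead_H_gt0 _)) (hB _ _); rewrite le_max lexx orbT.
have tT : r <= Num.max r B by rewrite le_max lexx.
have [y /andP [y1 y2] ry] := Num.Theory.poly_ivt tT (introT andP (conj (ltW neg) hT)).
have [rs ys pos] := @largest_rootP _ _ (lead_H_gt0 k.+2) ry.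
exists (largest_root (H k.+2)), r; split => //.
apply: (lt_le_trans _ ys); rewrite lt_neqAle y1 andbT.
by apply/eqP => ry'; move: ry; rewrite /root -ry' lt_eqF.
Qed.

End Alg.



Section An.
Variable R : realType.

Lemma cvg_sum_ord d (f : nat -> nat -> R) (l : nat -> R) :
  (forall i, (i < d)%N -> f i @ \oo --> l i) ->
  (fun n => \sum_(i < d) f i n) @ \oo --> \sum_(i < d) l i.
Proof.
elim: d => [|d IH] hf.
  under eq_cvg do rewrite big_ord0. rewrite big_ord0; exact: cvg_cst.
under eq_cvg do rewrite big_ord_recr /=. rewrite big_ord_recr /=.
apply: cvgD; last exact: hf.
by apply: IH => i hi; apply: hf; apply: ltnW.
Qed.

Lemma cvg_exprn (t : nat -> R) (t0 : R) i : t @ \oo --> t0 -> (fun n => t n ^+ i) @ \oo --> t0 ^+ i.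
Proof.
move=> ht; elim: i => [|i IH].
  under eq_cvg do rewrite expr0. rewrite expr0; exact: cvg_cst.
under eq_cvg do rewrite exprS. rewrite exprS; exact: cvgM.
Qed.

Lemma cvg_horner (p : nat -> {poly R}) (q : {poly R}) D (t : nat -> R) t0 :
  (forall n, (size (p n) <= D)%N) -> (size q <= D)%N ->
  (forall i, (i < D)%N -> (fun n => (p n)`_i) @ \oo --> q`_i) ->
  t @ \oo --> t0 ->
  (fun n => (p n).[t n]) @ \oo --> q.[t0].
Proof.
move=> sp sq hc ht.
under eq_cvg do rewrite (horner_coef_wide _ (sp _)).
rewrite (horner_coef_wide _ sq).
have := @cvg_sum_ord D (fun i n => (p n)`_i * t n ^+ i) (fun i => q`_i * t0 ^+ i). apply. move=> i hi.
apply: cvgM; first exact: hc.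
exact: cvg_exprn.
Qed.


Lemma uniform_pos (P : {poly R}) (ps : nat -> {poly R}) d (a : R) :
  size P = d.+1 -> 0 < lead_coef P -> (forall n, (size (ps n) <= d.+1)%N) ->
  (forall i, (i <= d)%N -> (fun n => (ps n)`_i) @ \oo --> P`_i) ->
  (forall t, a <= t -> 0 < P.[t]) ->
  \forall n \near \oo, forall t, a <= t -> 0 < (ps n).[t].
Proof.
move=> sP lP sps hc pos.
set c := lead_coef P.
have lc0 : 0 < c by [].
have cd : P`_d = c by rewrite /c lead_coefE sP.
set S := \sum_(i < d) `|P`_i|.
have S0 : 0 <= S by apply: sumr_ge0 => i _; exact: normr_ge0.
set A := Num.max 1 (Num.max a (2 * (S + 1) / c + 1)).
have A1 : 1 <= A by rewrite le_max lexx.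
have aA : a <= A by rewrite le_max le_max lexx orbT.
have Ab : 2 * (S + 1) / c < A.
  have : 2 * (S + 1) / c + 1 <= A by rewrite le_max le_max lexx !orbT.
  lra.
have hcP : {within `[a, A], continuous (horner P)}.
  by apply: continuous_subspaceT; exact: continuous_horner.
have [c0 c0in minP] := EVT_min aA hcP.
move: (c0in); rewrite in_itv /= => /andP [ac0 c0A].
set rho := P.[c0].
have rho0 : 0 < rho by apply: pos.
set C := `|a| + A.
have N1 : \forall n \near \oo, c / 2 < (ps n)`_d.
  have := @cvgr_gt R nat \oo _ (fun n => (ps n)`_d) (P`_d) (hc d (leqnn d)) (c / 2).
  apply; rewrite cd; lra.
have N2 : \forall n \near \oo, \sum_(i < d) `|(ps n)`_i| < S + 1.
  have : (fun n => \sum_(i < d) `|(ps n)`_i|) @ \oo --> S.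
    apply: (@cvg_sum_ord d (fun i n => `|(ps n)`_i|) (fun i => `|P`_i|)).
    by move=> i hi; apply: cvg_norm; apply: hc; apply: ltnW.
  move=> /(@cvgr_lt R nat \oo _) /(_ (S + 1)); apply; lra.
have N3 : \forall n \near \oo, \sum_(i < d.+1) `|(ps n)`_i - P`_i| * C ^+ i < rho.
  have := @cvg_sum_ord d.+1 (fun i n => `|(ps n)`_i - P`_i| * C ^+ i) (fun i => `|P`_i - P`_i| * C ^+ i).
  rewrite big1; last by move=> i _; rewrite subrr normr0 mul0r.
  move=> H3; have {}H3 : (fun n => \sum_(i < d.+1) `|(ps n)`_i - P`_i| * C ^+ i) @ \oo --> 0.
    apply: H3 => i hi; apply: cvgM; last exact: cvg_cst.
    by apply: cvg_norm; apply: cvgB; [apply: hc | exact: cvg_cst].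
  by move: H3 => /(@cvgr_lt R nat \oo _) /(_ rho rho0).
apply: filterS3 N1 N2 N3 => n h1 h2 h3 t ta.
have pn := sps n.
have sP' : (size P <= d.+1)%N by rewrite sP.
have [tA|At] := leP t A.
  have tin : t \in `[a, A] by rewrite in_itv /= ta tA.
  have Pt : rho <= P.[t] := minP t tin.
  have tC : `|t| <= C.
    rewrite ler_norml; apply/andP; split;
    have := ler_norm a; have := ler_norm (-a); rewrite normrN /C; lra.
  have hd : `|(ps n).[t] - P.[t]| < rho.
    rewrite (horner_coef_wide _ pn) (horner_coef_wide _ sP') -sumrB.
    apply: le_lt_trans (ler_norm_sum _ _ _) _; apply: le_lt_trans h3.
    apply: ler_sum => i _; rewrite -mulrBl normrM normrX.
    apply: ler_wpM2l; first exact: normr_ge0.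
    by apply: lerXn2r; rewrite ?nnegrE ?normr_ge0 //; apply: le_trans tC.
  have := ler_norm (- ((ps n).[t] - P.[t])); rewrite normrN; lra.
have t1 : 1 <= t by apply: le_trans A1 (ltW At).
have t0 : 0 < t by apply: lt_le_trans t1; exact: ltr01.
have tb : 2 * (S + 1) / c < t by apply: lt_trans Ab At.
rewrite (horner_coef_wide _ pn) big_ord_recr /=.
set cn := (ps n)`_d in h1 *.
set W := \sum_(i < d) `|(ps n)`_i| * t ^+ i.
set Sn := \sum_(i < d) `|(ps n)`_i| in h2.
have hW : - W <= \sum_(i < d) (ps n)`_i * t ^+ i.
  have := ler_norm (- \sum_(i < d) (ps n)`_i * t ^+ i); rewrite normrN => h.
  have : `|\sum_(i < d) (ps n)`_i * t ^+ i| <= W.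
    apply: le_trans (ler_norm_sum _ _ _) _; apply: ler_sum => i _.
    by rewrite normrM normrX (ger0_norm (ltW t0)).
  lra.
have tW : t * W <= Sn * t ^+ d.
  rewrite /W mulr_sumr /Sn mulr_suml; apply: ler_sum => i _.
  rewrite mulrCA -exprS; apply: ler_wpM2l; first exact: normr_ge0.
  by apply: ler_weXn2l => //; exact: ltn_ord.
have X0 : 0 < t ^+ d := exprn_gt0 _ t0.
have tb' : S + 1 < t * (c / 2).
  have hc2 : 0 < c / 2 by apply: divr_gt0 => //; exact: ltr0Sn.
  move: tb; rewrite -(ltr_pM2r hc2).
  by rewrite (_ : 2 * (S + 1) / c * (c / 2) = S + 1) //; field; rewrite gt_eqF.
have key : t * W < t * (cn * t ^+ d).
  apply: le_lt_trans tW _.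
  apply: (@lt_trans _ _ ((S + 1) * t ^+ d)); first by rewrite ltr_pM2r.
  rewrite mulrA; apply: (@lt_trans _ _ (t * (c / 2) * t ^+ d)); first by rewrite ltr_pM2r.
  by rewrite ltr_pM2r // ltr_pM2l.
move: key; rewrite ltr_pM2l // => key.
lra.
Qed.

End An.



Section Rho.
Variable R : realType.

Lemma cvg_near_eq (f g : nat -> R) (l : R) :
  (\forall n \near \oo, f n = g n) -> g @ \oo --> l -> f @ \oo --> l.
Proof.
move=> e hg; apply: cvg_trans hg; apply: near_eq_cvg.
by apply: filterS e => n /esym.
Qed.

Lemma inv_natr_cvg0 : (fun n : nat => (n%:R : R)^-1) @ \oo --> 0.
Proof.
rewrite -cvg_shiftS /=.
exact: (@cvg_harmonic R).
Qed.

Definition fr (j n : nat) : R := (n ^_ j)%:R / n%:R ^+ j.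

Lemma fr_cvg j : fr j @ \oo --> (1 : R).
Proof.
elim: j => [|j IH].
  apply: (@cvg_near_eq _ (fun=> 1)); last exact: cvg_cst.
  by near=> n; rewrite /fr ffactn0 expr0 divr1.
apply: (@cvg_near_eq _ (fun n => fr j n * (1 - j%:R * (n%:R)^-1))).
  near=> n; rewrite /fr ffactnSr natrM natrB; last by near: n; exact: nbhs_infty_ge.
  have n0 : (n%:R : R) != 0.
    by rewrite pnatr_eq0 -lt0n; near: n; exact: nbhs_infty_ge.
  rewrite exprSr; field; rewrite n0 /=.
  by rewrite expf_eq0 negb_and n0 orbT.
rewrite -[X in _ --> X]mulr1; apply: cvgM => //.
rewrite -[X in _ --> X]subr0; apply: cvgB; first exact: cvg_cst.
rewrite -(mulr0 (j%:R : R)); apply: cvgM; first exact: cvg_cst.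
exact: inv_natr_cvg0.
Unshelve. all: by end_near.
Qed.

Definition rho (j n : nat) : R := n%:R ^+ j.+1 * (n - j.+1)`!%:R / n`!%:R.

Lemma rho_cvg j : rho j @ \oo --> (1 : R).
Proof.
apply: (@cvg_near_eq _ (fun n => (fr j.+1 n)^-1)).
  near=> n; rewrite /rho /fr.
  have hn : (j.+1 <= n)%N by near: n; exact: nbhs_infty_ge.
  rewrite -(ffact_fact hn) natrM invf_div.
  have n0 : (n%:R : R) != 0 by rewrite pnatr_eq0 -lt0n; apply: leq_trans hn.
  have f0 : ((n - j.+1)`!%:R : R) != 0 by rewrite pnatr_eq0 -lt0n fact_gt0.
  have f1 : ((n ^_ j.+1)%:R : R) != 0 by rewrite pnatr_eq0 -lt0n ffact_gt0.
  field; rewrite f0 f1 //.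
rewrite -invr1; apply: cvgV; first exact: oner_neq0.
exact: fr_cvg.
Unshelve. all: by end_near.
Qed.

End Rho.



Lemma coef_compZX (R : realType) (p : {poly R}) c i : (p \Po (c *: 'X))`_i = c ^+ i * p`_i.
Proof.
rewrite comp_polyE coef_sum.
under eq_bigr do rewrite exprZn coefZ coefZ coefXn.
case: (ltnP i (size p)) => hi.
  rewrite (bigD1 (Ordinal hi)) //= big1 ?addr0; first by rewrite eqxx mulr1 mulrC.
  move=> k hk; have : (k != i :> nat).
    by move: hk; apply: contra => /eqP e; apply/eqP/val_inj.
  by rewrite eq_sym => /negbTE ->; rewrite !mulr0.
rewrite nth_default // mulr0 big1 // => k _.
have : (k != i :> nat) by rewrite neq_ltn (leq_trans (ltn_ord k) hi).
by rewrite eq_sym => /negbTE ->; rewrite !mulr0.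
Qed.

Section Main.
Variable R : realType.
Variable m : nat.
Hypothesis hm : (2 <= m)%N.
Local Notation T := (chebT R).
Local Notation H := (hermH R).

Definition u n := (T n)^`(n - m).
Definition Kn n : R := 2 ^+ n.-1 * n`!%:R / m`!%:R.
Definition sq n : R := Num.sqrt (n%:R).
Definition Q n := (sq n ^+ m / Kn n) *: (u n \Po ((sq n)^-1 *: 'X)).
Definition hh := (2%:R ^- m : R) *: H m.

Lemma coef_Q n i : (Q n)`_i = sq n ^+ m / Kn n * ((sq n)^-1 ^+ i * (u n)`_i).
Proof. by rewrite /Q coefZ coef_compZX. Qed.

Lemma coef_u n i : (u n)`_i = (T n)`_(n - m + i) *+ (n - m + i) ^_ (n - m).
Proof. by rewrite /u coef_derivn. Qed.

Lemma coef_Q_big n i : (m < i)%N -> (Q n)`_i = 0.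
Proof.
move=> mi; rewrite coef_Q coef_u coefT_big ?mul0rn ?mulr0 //; lia.
Qed.

Lemma size_Q n : (size (Q n) <= m.+1)%N.
Proof. by apply/leq_sizeP => j hj; apply: coef_Q_big. Qed.

Lemma size_hh : size hh = m.+1.
Proof. by rewrite /hh size_scale ?size_H // invr_eq0 expf_eq0 pnatr_eq0 andbF. Qed.

Lemma Qcoef_even i j k : m = (i + 2 * j)%N ->
  (Q (i + 2 * j + k.+1))`_i = (2 ^+ m)^-1 * Hcoef R i j * rho R j (i + 2 * j + k.+1).
Proof.
move=> hmij; set n := (i + 2 * j + k.+1)%N.
rewrite coef_Q coef_u.
have e1 : (n - m = k.+1)%N by rewrite /n hmij; lia.
rewrite e1.
have eT : (T n)`_(k.+1 + i) = Tcoef R (k.+1 + i) j.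
  by rewrite -coefT_main; congr (_ `_ _); congr (T _); rewrite /n; lia.
rewrite eT.
have eF : (((k.+1 + i) ^_ k.+1)%:R : R) = (k.+1 + i)`!%:R / i`!%:R.
  have := ffact_fact (leq_addr i k.+1); rewrite (_ : (k.+1 + i - k.+1 = i)%N); last by lia.
  move=> <-; rewrite natrM mulfK //; exact: fact_neq0.
rewrite -[Tcoef R _ j *+ _]mulr_natr eF.
have n0 : (0 <= n%:R :> R) by exact: ler0n.
have sq0 : sq n != 0 by rewrite /sq sqrtr_eq0 -ltNge ltr0n /n; lia.
have eS : sq n ^+ m * (sq n)^-1 ^+ i = n%:R ^+ j.
  rewrite hmij exprD exprVn mulrAC divff ?expf_neq0 // mul1r.
  by rewrite exprM -[sq n ^+ 2]/(sq n ^+ 2) sqr_sqrtr.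
have sqm0 : sq n ^+ m != 0 by rewrite expf_neq0.
have eS' : (sq n)^-1 ^+ i = n%:R ^+ j / sq n ^+ m.
  by rewrite -eS mulrC mulKf.
rewrite eS' /Kn /Tcoef /Hcoef /rho addSn.
rewrite (_ : ((k + i).+1 + 2 * j = n)%N); last by rewrite /n; lia.
rewrite (_ : ((k + i + j) = n - j.+1)%N); last by rewrite /n; lia.
rewrite (_ : (n.-1 = i + 2 * j + k)%N); last by rewrite /n; lia.
rewrite hmij !exprD.
have f1 := fact_neq0 R (n - j.+1); have f2 := fact_neq0 R n; have f3 := fact_neq0 R (i + 2 * j).
have f4 := fact_neq0 R j; have f5 := fact_neq0 R i; have f6 := fact_neq0 R (k + i).+1.
have nn0 : (n%:R : R) != 0 by rewrite pnatr_eq0 /n; lia.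
have t0 : forall e, (2 ^+ e : R) != 0 by move=> e; rewrite expf_neq0 // pnatr_eq0.
rewrite -hmij in sqm0 *.
have fm := fact_neq0 R m.
rewrite !expr0 !mulr1.
move: sqm0; rewrite hmij !exprD !expr0 !mulr1 -hmij => sqm0.
move: (sq n) sqm0 => s sqm0.
move: (n%:R : R) nn0 => N nn0.
move: (n`!%:R : R) f2 => Fn f2.
move: (m`!%:R : R) fm => Fm fm.
move: ((n - j.+1)`!%:R : R) f1 => F1 f1.
move: (j`!%:R : R) f4 => Fj f4.
move: (i`!%:R : R) f5 => Fi f5.
move: (((k + i).+1)`!%:R : R) f6 => Fk f6.
rewrite exprS.
have si0 : s ^+ i != 0 by move: sqm0; rewrite !mulf_eq0 !negb_or => /andP[].
have sj0 : s ^+ j != 0 by move: sqm0; rewrite !mulf_eq0 !negb_or => /and3P[].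
have ti := t0 i; have tj := t0 j; have tk := t0 k.
move: (s ^+ i) si0 => Si si0; move: (s ^+ j) sj0 => Sj sj0.
move: (2 ^+ i : R) ti => Ti ti; move: (2 ^+ j : R) tj => Tj tj; move: (2 ^+ k : R) tk => Tk tk.
move: (N ^+ j) => Nj; move: ((-1) ^+ j : R) => Mj.
field. by rewrite f2 ?f5 ?f4 ?tj ?ti ?f6 ?sj0 ?si0 ?fm ?tk.
Qed.


Lemma Q_cvg i : (fun n => (Q n)`_i) @ \oo --> hh`_i.
Proof.
rewrite /hh coefZ.
case: (ltnP m i) => [mi|im].
  rewrite coefH_big // mulr0.
  apply: (@cvg_near_eq R _ (fun=> 0)); last exact: cvg_cst.
  by near=> n; rewrite coef_Q_big.
set j := ((m - i)./2)%N.
have hmi : m = (i + 2 * j + odd (m - i))%N.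
  have := odd_double_half (m - i); rewrite -/j -muln2 => h; lia.
case Ho: (odd (m - i)) in hmi.
  have -> : (H m)`_i = 0 by rewrite hmi addn1 coefH_odd.
  rewrite mulr0; apply: (@cvg_near_eq R _ (fun=> 0)); last exact: cvg_cst.
  near=> n.
  have hn : (m <= n)%N by near: n; exact: nbhs_infty_ge.
  rewrite coef_Q coef_u (_ : T n = T (n - m + i + 2 * j).+1); last by congr T; lia.
  by rewrite coefT_odd mul0rn !mulr0.
have hmi' : m = (i + 2 * j)%N by rewrite hmi addn0.
have -> : (H m)`_i = Hcoef R i j.
  by rewrite -coefH_main; congr (_ `_ _); congr (H _).
apply: (@cvg_near_eq R _ (fun n => (2 ^+ m)^-1 * Hcoef R i j * rho R j n)).
  near=> n.
  have hn : (m < n)%N by near: n; exact: nbhs_infty_ge.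
  have -> : n = (i + 2 * j + (n - m - 1).+1)%N by lia.
  exact: Qcoef_even.
rewrite -[X in _ --> X]mulr1.
apply: cvgM; [exact: cvg_cst | exact: rho_cvg].
Unshelve. all: by end_near.
Qed.


Lemma coef_u_big n i : (m < i)%N -> (u n)`_i = 0.
Proof. by move=> mi; rewrite coef_u coefT_big ?mul0rn //; lia. Qed.

Lemma size_u n : (size (u n) <= m.+1)%N.
Proof. by apply/leq_sizeP => j hj; apply: coef_u_big. Qed.

Lemma sq_gt0 n : (0 < n)%N -> 0 < sq n.
Proof. by move=> n0; rewrite /sq sqrtr_gt0 ltr0n. Qed.

Lemma Kn_gt0 n : 0 < Kn n.
Proof.
rewrite /Kn divr_gt0 ?mulr_gt0 ?exprn_gt0 ?ltr0n ?fact_gt0 //.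
Qed.

Lemma sqinv_cvg0 : (fun n => (sq n)^-1) @ \oo --> (0 : R).
Proof.
apply: (@cvg_near_eq R _ (fun n => Num.sqrt ((n%:R : R)^-1))).
  by near=> n; rewrite /sq sqrtrV // ler0n.
rewrite -sqrtr0.
apply: (continuous_cvg _ (@sqrt_continuous R 0)).
exact: inv_natr_cvg0.
Unshelve. all: by end_near.
Qed.

Lemma u1_eq n : (0 < n)%N ->
  (u n).[1] / Kn n = \sum_(i < m.+1) (Q n)`_i * (sq n)^-1 ^+ (m - i).
Proof.
move=> n0; rewrite (horner_coef_wide _ (size_u n)) mulr_suml.
apply: eq_bigr => i _; rewrite coef_Q expr1n mulr1.
have sq0 : sq n != 0 by rewrite gt_eqF // sq_gt0.
have hi : (i <= m)%N by rewrite -ltnS.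
have e : (sq n)^-1 ^+ i * (sq n)^-1 ^+ (m - i) = (sq n ^+ m)^-1.
  by rewrite -exprD subnKC // exprVn.
rewrite [X in _ = X](_ : _ = sq n ^+ m * ((sq n)^-1 ^+ i * (sq n)^-1 ^+ (m - i)) * (u n)`_i / Kn n); last by ring.
by rewrite e mulfV ?expf_neq0 // mul1r.
Qed.

Lemma u1_cvg : (fun n => (u n).[1] / Kn n) @ \oo --> (1 : R).
Proof.
apply: (@cvg_near_eq R _ (fun n => \sum_(i < m.+1) (Q n)`_i * (sq n)^-1 ^+ (m - i))).
  by near=> n; apply: u1_eq; near: n; exact: nbhs_infty_ge.
have -> : (1 : R) = \sum_(i < m.+1) hh`_i * 0 ^+ (m - i).
  rewrite big_ord_recr /= subnn expr0 mulr1 big1 ?add0r.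
    by rewrite /hh coefZ coefH_lead mulVf // expf_neq0 // pnatr_eq0.
  by move=> i _; rewrite expr0n subn_eq0 leqNgt ltn_ord mulr0.
have := @cvg_sum_ord R m.+1 (fun i n => (Q n)`_i * (sq n)^-1 ^+ (m - i)) (fun i => hh`_i * 0 ^+ (m - i)).
apply => i _.
apply: cvgM; first exact: Q_cvg.
exact: cvg_exprn sqinv_cvg0.
Unshelve. all: by end_near.
Qed.

Lemma hornerQ n t : (Q n).[t] = sq n ^+ m / Kn n * (u n).[(sq n)^-1 * t].
Proof. by rewrite /Q hornerZ horner_comp hornerZ hornerX. Qed.

Lemma hornerQ' n t : ((Q n)^`()).[t] = sq n ^+ m / Kn n * (((u n)^`()).[(sq n)^-1 * t] * (sq n)^-1).
Proof.
rewrite /Q derivZ deriv_comp derivZ derivX hornerZ hornerM horner_comp !hornerZ hornerX.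
by rewrite -[1]/(1%:P) hornerC mulr1.
Qed.


Lemma s_cvg : (fun n => sq n * largest_root ((u n)^`())) @ \oo --> largest_root ((H m)^`()).
Proof.
have [k ek] : exists k, m = k.+2 by exists (m - 2)%N; lia.
have [r [r' [rr' rr pos1 pos0]]] := herm_roots R k.
have dH : (H m)^`() = (2 * k.+2)%:R *: H k.+1 by rewrite ek hermH_deriv.
have n20 : forall q : nat, ((2 * q.+1)%:R : R) != 0 by move=> q; rewrite pnatr_eq0.
have xpr : largest_root ((H m)^`()) = r.
  rewrite /largest_root; set E := [set x | root ((H m)^`()) x].
  have Er : E r by rewrite /E /= dH rootZ.
  have ubr : ubound E r.
    move=> y; rewrite /E /= dH rootZ // => ry; rewrite leNgt; apply/negP => /pos1.
    by rewrite (eqP ry) ltxx.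
  apply/eqP; rewrite eq_le; apply/andP; split.
    by apply: ge_sup => //; exists r.
  by apply: ub_le_sup => //; exists r.
rewrite xpr.
set c := (2%:R ^- m * (2 * k.+2)%:R : R).
have c0 : 0 < c by rewrite /c mulr_gt0 ?invr_gt0 ?exprn_gt0 ?ltr0n.
set P := hh^`().
have PE : P = c *: H k.+1 by rewrite /P /hh derivZ dH scalerA.
have Ppos : forall t, r < t -> 0 < P.[t] by move=> t rt; rewrite PE hornerZ mulr_gt0 ?pos1.
have sizeP : size P = k.+2 by rewrite PE size_scale ?size_H // gt_eqF.
have leadP : 0 < lead_coef P by rewrite PE lead_coefZ mulr_gt0 ?lead_H_gt0.
have sizePs : forall n, (size ((Q n)^`()) <= k.+2)%N.
  move=> n; apply/leq_sizeP => j hj; rewrite coef_deriv coef_Q_big ?mul0rn //; lia.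
have cvgPs : forall i, (i <= k.+1)%N -> (fun n => ((Q n)^`())`_i) @ \oo --> P`_i.
  move=> i _; rewrite /P coef_deriv.
  under eq_cvg do rewrite coef_deriv.
  exact: cvgMn (Q_cvg i.+1).
apply/cvgrPdist_lt => e e0.
set b := r + e / 2.
have rb : r < b by rewrite /b; lra.
have N1 := @uniform_pos R P (fun n => (Q n)^`()) k.+1 b sizeP leadP sizePs cvgPs
  (fun t bt => Ppos t (lt_le_trans rb bt)).
set d := Num.min (e / 2) ((r - r') / 2).
have d0 : 0 < d by rewrite /d lt_min; apply/andP; split; lra.
have de : d <= e / 2 by rewrite /d ge_min lexx.
have dr : d <= (r - r') / 2 by rewrite /d ge_min lexx orbT.
set t1 := r - d.
have t1r : t1 < r by rewrite /t1; lra.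
have Pt1 : P.[t1] < 0.
  have [c1 c1in hmvt] := poly_mvt (H k.+1) t1r.
  move: c1in; rewrite in_itv /= => /andP [c1a c1b].
  have : 0 < ((H k.+1)^`()).[c1] * (r - t1).
    rewrite hermH_deriv hornerZ mulr_gt0 ?subr_gt0 // mulr_gt0 ?ltr0n //.
    by apply: pos0; rewrite /t1 in c1a; lra.
  rewrite -hmvt (eqP rr) sub0r oppr_gt0 => h.
  by rewrite PE hornerZ pmulr_rlt0.
have N2 : \forall n \near \oo, ((Q n)^`()).[t1] < 0.
  have e1 : (size P <= k.+2)%N by rewrite sizeP.
  have e2 : (fun=> t1) @ \oo --> t1 by exact: cvg_cst.
  have hcv := @cvg_horner R (fun n => (Q n)^`()) P k.+2 (fun=> t1) t1 sizePs e1 cvgPs e2.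
  by move: hcv => /(@cvgr_lt R nat \oo _) /(_ 0 Pt1).
have N3 : \forall n \near \oo, (0 < n)%N by exact: nbhs_infty_ge.
apply: filterS3 N1 N2 N3 => n h1 h2 h3.
have sqn0 : 0 < sq n := sq_gt0 n h3.
have Kn0 := Kn_gt0 n.
have cQ0 : sq n ^+ m / Kn n != 0 by rewrite gt_eqF // divr_gt0 // exprn_gt0.
have rootE : forall t, root ((Q n)^`()) t = root ((u n)^`()) ((sq n)^-1 * t).
  move=> t; rewrite /root hornerQ' mulf_eq0 (negbTE cQ0) /= mulf_eq0 invr_eq0.
  by rewrite (gt_eqF sqn0) orbF.
have t1b : t1 <= b by apply: ltW; apply: lt_trans t1r rb.
have [y /andP [y1 y2] ry] := Num.Theory.poly_ivt t1b (introT andP (conj (ltW h2) (ltW (h1 b (lexx b))))).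
set En := [set x | root ((u n)^`()) x].
have Eny : En ((sq n)^-1 * y) by rewrite /En /= -rootE.
have ubEn : ubound En ((sq n)^-1 * b).
  move=> x; rewrite /En /= => rx; rewrite leNgt; apply/negP => hx.
  have hb : b <= sq n * x.
    by move: hx; rewrite -(ltr_pM2l sqn0) mulrA divff ?gt_eqF // mul1r => /ltW.
  have := h1 _ hb; rewrite lt0r => /andP [/negP + _]; apply.
  by rewrite -/(root _ _) rootE mulrA mulVf ?gt_eqF // mul1r.
have hw1 : (sq n)^-1 * y <= largest_root ((u n)^`()).
  by apply: ub_le_sup => //; exists ((sq n)^-1 * b).
have hw2 : largest_root ((u n)^`()) <= (sq n)^-1 * b.
  by apply: ge_sup => //; exists ((sq n)^-1 * y).
have s1 : y <= sq n * largest_root ((u n)^`()).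
  by move: hw1; rewrite -(ler_pM2l sqn0) mulrA divff ?gt_eqF // mul1r.
have s2 : sq n * largest_root ((u n)^`()) <= b.
  by move: hw2; rewrite -(ler_pM2l sqn0) mulrA divff ?gt_eqF // mul1r.
rewrite ltr_norml; apply/andP; split; rewrite /b /t1 in s2 y1 *; lra.
Qed.


Lemma final_eq n : (m < n)%N -> Num.sqrt (n%:R : R) ^+ m * tau R n (n - m) =
  `|(Q n).[sq n * largest_root ((u n)^`())]| / ((u n).[1] / Kn n).
Proof.
move=> mn.
have n0 : (0 < n)%N by apply: leq_ltn_trans mn.
have sqn0 : 0 < sq n := sq_gt0 n n0.
have Kn0 := Kn_gt0 n.
rewrite /tau /omega derivnS -/(u n) hornerQ mulKf ?gt_eqF //.
rewrite normrM (ger0_norm (ltW (divr_gt0 (exprn_gt0 _ sqn0) Kn0))) invf_div -/(sq n).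
move: ((u n).[1]) => U1.
rewrite /u -/(u n).
move: (`|(u n).[largest_root (u n)^`()]|) => X.
have [->|U10] := eqVneq U1 0; first by rewrite invr0 !mulr0 mul0r invr0 mulr0.
rewrite /Kn; field; rewrite U10 fact_neq0 fact_neq0 andbT expf_neq0 // pnatr_eq0.
Qed.

Lemma main_lim :
  (fun n : nat => Num.sqrt (n%:R : R) ^+ m * tau R n (n - m)) @ \oo
    --> (2%:R ^- m * `|(H m).[largest_root (H m)^`()]| : R).
Proof.
apply: (@cvg_near_eq R _ (fun n => `|(Q n).[sq n * largest_root ((u n)^`())]| / ((u n).[1] / Kn n))).
  by near=> n; apply: final_eq; near: n; exact: nbhs_infty_ge.
have -> : (2%:R ^- m * `|(H m).[largest_root (H m)^`()]| : R) =
    `|hh.[largest_root (H m)^`()]| / 1.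
  rewrite divr1 /hh hornerZ normrM ger0_norm // invr_ge0 exprn_ge0 // ler0n.
apply: cvgM.
  apply: cvg_norm.
  apply: (@cvg_horner R Q hh m.+1) => //.
  - exact: size_Q.
  - by rewrite size_hh.
  - by move=> i _; apply: Q_cvg.
  - exact: s_cvg.
apply: cvgV; first exact: oner_neq0.
exact: u1_cvg.
Unshelve. all: by end_near.
Qed.

End Main.

Theorem lemma6p4 (R : realType) (m : nat) (hm : (2 <= m)%N) :
  (fun n : nat => Num.sqrt (n%:R : R) ^+ m * tau R n (n - m)%N) @ \oo
    --> (2%:R ^- m * `|(hermH R m).[largest_root (hermH R m)^`()]| : R).
Proof. exact: main_lim. Qed.
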